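(* Let $n\ge 2$ and let $G$ be a graph on $2n+1$ vertices with at least $n^2+n$ edges that contains no two distinct vertices of the same degree joined by a path of length three. Let $\beta$ be the largest integer such that $G$ contains two distinct vertices of degree $\beta$. Then $\beta\le n+1$. Moreover, if $\beta=n+1$, then $G$ is isomorphic to $K_{n,n+1}$.
   Context: A path of length three joining vertices $a$ and $b$ is a path $a\,x\,y\,b$ with four distinct vertices and three edges. Graphs are finite and simple. *)

(* Defs.v *)
From mathcomp Require Import all_boot.
Set Implicit Arguments. Unset Strict Implicit. Unset Printing Implicit Defensive.

Definition simple_graph (T : finType) (e : rel T) : Prop :=
  symmetric e /\ irreflexive e.

Definition edges (T : finType) (e : rel T) : {set {set T}} :=
  [set [set p.1; p.2] | p in [set p : T * T | e p.1 p.2]].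

Definition deg (T : finType) (e : rel T) (x : T) : nat := #|[set y | e x y]|.

Definition path3 (T : finType) (e : rel T) (a b : T) : Prop :=
  exists x y : T,
    [/\ uniq [:: a; x; y; b], e a x, e x y & e y b].

Definition Kbip_adj (m k : nat) : rel ('I_m + 'I_k) :=
  fun u v => match u, v with
             | inl _, inr _ => true
             | inr _, inl _ => true
             | _, _ => false
             end.

Definition graph_iso (T U : finType) (e : rel T) (e' : rel U) : Prop :=
  exists f : T -> U, bijective f /\ forall x y, e' (f x) (f y) = e x y.

(* Main.v *)
Require Import Defs.
From mathcomp Require Import all_boot zify.
Set Implicit Arguments. Unset Strict Implicit. Unset Printing Implicit Defensive.

Lemma deg_sum (T : finType) (e : rel T) x : deg e x = \sum_y (e x y : nat).
Proof.
rewrite /deg -sum1_card big_mkcond /=; apply: eq_bigr => y _; rewrite inE.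
by case: (e x y).
Qed.

Lemma edges_le (T : finType) (e : rel T) : symmetric e -> irreflexive e ->
  2 * #|edges e| <= \sum_x \sum_y (e x y : nat).
Proof.
move=> sym irr.
pose lt (x y : T) := enum_rank x < enum_rank y.
pose A1 := [set p : T * T | e p.1 p.2 && lt p.1 p.2].
have h1 : #|edges e| <= #|A1|.
  have -> : edges e = (fun p : T * T => [set p.1; p.2]) @: A1.
    apply/setP => s; apply/imsetP/imsetP => -[p hp ->].
    - move: hp; rewrite inE => hp.
      have hne : p.1 != p.2 by apply/eqP => eq; move: hp; rewrite eq irr.
      case: (ltngtP (enum_rank p.1) (enum_rank p.2)) => h.
      + by exists p => //; rewrite inE hp.
      + exists (p.2, p.1); first by rewrite inE /= sym hp.
        by rewrite /= setUC.
      + by have hh := enum_rank_inj (val_inj h); rewrite hh eqxx in hne.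
    - by exists p => //; move: hp; rewrite !inE => /andP[].
  exact: leq_imset_card.
have h2 : #|A1| = \sum_x \sum_y (e x y && lt x y : nat).
  rewrite -sum1_card pair_big /= big_mkcond /=; apply: eq_bigr => -[x y] _.
  by rewrite inE /=; case: (_ && _).
have h3 : \sum_x \sum_y (e x y : nat) =
   \sum_x \sum_y (e x y && lt x y : nat) + \sum_x \sum_y (e x y && lt y x : nat).
  rewrite -big_split /=; apply: eq_bigr => x _; rewrite -big_split /=.
  apply: eq_bigr => y _.
  case exy: (e x y) => //=.
  have hne : x != y by apply/eqP => eq; move: exy; rewrite eq irr.
  rewrite /lt; case: (ltngtP (enum_rank x) (enum_rank y)) => h //.
  by have hh := enum_rank_inj (val_inj h); rewrite hh eqxx in hne.
have h4 : \sum_x \sum_y (e x y && lt y x : nat) = \sum_x \sum_y (e x y && lt x y : nat).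
  rewrite exchange_big /=; apply: eq_bigr => x _; apply: eq_bigr => y _.
  by rewrite sym.
rewrite h3 h4 -h2; lia.
Qed.

Lemma ph (T : finType) (C : {set T}) (s : T -> nat) b :
  {in C &, injective s} -> (forall x, x \in C -> s x <= b) -> #|C| <= b.+1.
Proof.
move=> inj hb.
pose f x : 'I_b.+1 := inord (s x).
have injf : {in C &, injective f}.
  move=> x y hx hy /(congr1 val); rewrite /f /= !inordK ?ltnS ?hb //.
  exact: inj.
rewrite -(card_in_imset injf); apply: leq_trans (max_card _) _; by rewrite card_ord.
Qed.

Lemma sum_range k r : 2 * \sum_(j < r.+1) (j - k) = (r - k) * (r - k).+1.
Proof.
elim: r => [|r IH]; first by rewrite big_ord_recr big_ord0 /=; lia.
rewrite big_ord_recr /= mulnDr IH.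
case: (leqP r.+1 k) => h.
  have -> : r.+1 - k = 0 by lia.
  have -> : r - k = 0 by lia.
  done.
have -> : r.+1 - k = (r - k).+1 by lia.
nia.
Qed.

Lemma sum_distinct (T : finType) (C : {set T}) (s : T -> nat) k r :
  {in [set x in C | k < s x] &, injective s} -> (forall x, x \in C -> s x <= r) ->
  2 * \sum_(x in C | k < s x) (s x - k) <= (r - k) * (r - k).+1.
Proof.
move=> inj hr.
pose p x : 'I_r.+1 := inord (s x).
rewrite (partition_big p xpredT) //= -sum_range leq_mul2l /=.
apply: leq_sum => j _.
case: (pickP [pred x | (x \in C) && (k < s x) && (p x == j)]) => [x /= /andP[/andP[xC kx] /eqP pxj]|none].
  have sxj : s x = j by rewrite -pxj /p inordK // ltnS hr.
  rewrite (bigD1 x) /=; last by rewrite xC kx pxj eqxx.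
  rewrite big1 ?addn0 ?sxj // => y /andP[/andP[/andP[yC ky] /eqP pyj] ynx].
  have syj : s y = j by rewrite -pyj /p inordK // ltnS hr.
  have : y = x by apply: inj; rewrite ?inE ?yC ?xC //= syj sxj.
  by move/eqP; rewrite (negbTE ynx).
rewrite big1 // => y /andP[/andP[yC ky] pyj].
by move: (none y); rewrite /= yC ky pyj.
Qed.

Lemma sum_neq (T : finType) (R : {set T}) t : t \in R ->
  \sum_(t' in R) (t != t' : nat) = #|R|.-1.
Proof.
move=> tR; rewrite (bigD1 t tR) /= eqxx add0n.
rewrite (eq_bigr (fun=> 1)); last by move=> t' /andP[_ ne]; rewrite eq_sym ne.
rewrite (eq_bigl (mem (R :\ t))); last by move=> y; rewrite /= !inE andbC.
by rewrite sum1_card (cardsD1 t R) tR.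
Qed.

Lemma sum_le_card (T : finType) (R : {set T}) (f : T -> bool) :
  \sum_(t in R) (f t : nat) <= #|R|.
Proof.
rewrite -sum1_card; apply: leq_sum => t _; by case: (f t).
Qed.

Lemma key (T : finType) (e : rel T) (C R : {set T}) :
  irreflexive e ->
  #|R| < #|C| ->
  (forall x x' t t', x \in C -> x' \in C -> x != x' ->
      \sum_(y in R) (e x y : nat) = \sum_(y in R) (e x' y : nat) ->
      t \in R -> t' \in R -> e x t -> e x' t' -> t != t' -> ~~ e t t') ->
  \sum_(t in R) \sum_(t' in R) (e t t' : nat)
     <= 2 * \sum_(x in C) (#|R| - \sum_(y in R) (e x y : nat)) /\
  (0 < \sum_(t in R) \sum_(t' in R) (e t t' : nat) ->
   \sum_(t in R) \sum_(t' in R) (e t t' : nat) + 2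
     <= 2 * \sum_(x in C) (#|R| - \sum_(y in R) (e x y : nat))).
Proof.
move=> irr hcard H.
set s := fun x => \sum_(y in R) (e x y : nat).
rewrite -/(s _).
have -> : \sum_(x in C) (#|R| - \sum_(y in R) (e x y : nat)) = \sum_(x in C) (#|R| - s x) by [].
set E := \sum_(t in R) \sum_(t' in R) (e t t' : nat).
set r := #|R|.
have sr : forall x, s x <= r by move=> x; exact: sum_le_card.
pose P j := (j == 0) || [exists x in C, exists x' in C, (x != x') && (s x == j) && (s x' == j)].
have exP : exists j, P j by exists 0.
have ubP : forall j, P j -> j <= r.
  move=> j /orP[/eqP -> //|/existsP[x /andP[_ /existsP[x' /andP[_ /andP[/andP[_ /eqP <-] _]]]]]].
  exact: sr.
case: (ex_maxnP exP ubP) => k Pk maxk.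
have kr : k <= r by exact: ubP.
have sc : \sum_(t in R) r.-1 = r * r.-1 by rewrite sum_nat_const.
have hE : E + k * k.-1 <= r * r.-1.
  have base : E <= r * r.-1.
    rewrite /E -sc; apply: leq_sum => t tR.
    rewrite -(sum_neq tR); apply: leq_sum => t' _.
    by case et: (e t t') => //; case: (t =P t') et => // ->; rewrite irr.
  move: Pk; rewrite /P => /orP[/eqP k0|]; first by rewrite k0 muln0 addn0.
  move=> /existsP[x /andP[xC /existsP[x' /andP[x'C /andP[/andP[xx' /eqP sxk] /eqP sx'k]]]]].
  have hpt : E + \sum_(t in R) \sum_(t' in R) (e x t && e x' t' && (t != t') : nat) <= r * r.-1.
    rewrite /E -big_split /= -sc; apply: leq_sum => t tR.
    rewrite -big_split /= -(sum_neq tR); apply: leq_sum => t' t'R.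
    case et: (e t t') => /=.
      have tt' : t != t' by apply/eqP => eq; move: et; rewrite eq irr.
      rewrite tt' andbT.
      case ext: (e x t) => //; case ex't: (e x' t') => //=.
      by move: (H x x' t t' xC x'C xx' (etrans sxk (esym sx'k)) tR t'R ext ex't tt'); rewrite et.
    case: (t =P t') => [->|_]; first by rewrite /= andbF.
    by case: (_ && _).
  have hk : k * k.-1 <= \sum_(t in R) \sum_(t' in R) (e x t && e x' t' && (t != t') : nat).
    have inner : forall t, t \in R -> k.-1 <= \sum_(t' in R) (e x' t' && (t != t') : nat).
      move=> t tR.
      have : \sum_(t' in R) (e x' t' : nat) <= \sum_(t' in R) (e x' t' && (t != t') : nat) + 1.
        rewrite (bigD1 t tR) /= [X in _ <= X + _](bigD1 t tR) /= eqxx andbF add0n.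
        rewrite [X in _ <= X]addnC; apply: leq_add; first by case: (e x' t).
        apply: leq_sum => t' /andP[_ ne]; by rewrite eq_sym ne andbT.
      rewrite -/(s x') sx'k; lia.
    apply: (@leq_trans (\sum_(t in R) (e x t : nat) * k.-1)).
      by rewrite -big_distrl /= -/(s x) sxk.
    apply: leq_sum => t tR.
    case: (e x t) => /=; last by rewrite mul0n.
    rewrite mul1n; exact: inner.
  lia.
set J := \sum_(x in C | k < s x) (s x - k).
have hJ : 2 * J <= (r - k) * (r - k).+1.
  apply: sum_distinct => [x y|x _]; last exact: sr.
  rewrite !inE => /andP[xC kx] /andP[yC ky] sxy.
  apply/eqP; apply: contraT => xy.
  have : P (s x).
    apply/orP; right; apply/existsP; exists x; rewrite xC /=.
    by apply/existsP; exists y; rewrite yC xy sxy eqxx.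
  by move/maxk; rewrite leqNgt kx.
have hDJ : #|C| * (r - k) <= \sum_(x in C) (r - s x) + J.
  rewrite /J big_mkcondr /= -big_split /= -sum_nat_const; apply: leq_sum => x xC.
  have := sr x; case: ifP => /=; lia.
set Dl := \sum_(x in C) (r - s x).
have key2 : E + 2 * (r - k) <= 2 * Dl.
  have hc : r.+1 <= #|C| by [].
  have [d rkd] : exists d, r = k + d by exists (r - k); lia.
  have rk : r - k = d by lia.
  rewrite rk in hDJ hJ *.
  have h2 : (k + d).+1 * d <= #|C| * d by rewrite leq_mul2r -rkd hc orbT.
  have pk : k * k.-1 + k = k * k by case: (k) => // k'; rewrite mulnS /=; lia.
  have pr : r * r.-1 + r = r * r by case: (r) => // r'; rewrite mulnS /=; lia.
  have e1 : (k + d).+1 * d = k * d + d * d + d by rewrite mulSn mulnDl; lia.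
  have e2 : r * r = k * k + 2 * (k * d) + d * d by rewrite rkd mulnDl !mulnDr (mulnC d k); lia.
  have e3 : d * d.+1 = d * d + d by rewrite mulnS; lia.
  rewrite e3 in hJ; rewrite e1 in h2.
  have hE2 : E + k * k + r <= r * r + k by lia.
  rewrite e2 in hE2.
  lia.
split; first lia.
move=> E0.
have : k < r.
  rewrite ltn_neqAle kr andbT; apply/eqP => kr'.
  move: hE; rewrite kr'; lia.
lia.
Qed.

Lemma nopath (T : finType) (e : rel T) :
  irreflexive e ->
  (forall a b : T, a != b -> deg e a = deg e b -> ~ path3 e a b) ->
  forall a x y b, a != b -> deg e a = deg e b -> a != y -> x != b ->
  e a x -> e x y -> e y b -> False.
Proof.
move=> irr Hp a x y b ab dab ay xb eax exy eyb.
apply: (Hp a b ab dab); exists x, y; split => //.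
have ax : a != x by apply/eqP => eq; move: eax; rewrite eq irr.
have xy : x != y by apply/eqP => eq; move: exy; rewrite eq irr.
have yb : y != b by apply/eqP => eq; move: eyb; rewrite eq irr.
rewrite /= !inE !negb_or ax ay ab xy xb yb.
done.
Qed.

Lemma split4 (T : finType) (P R : {set T}) (u v : T) (F : T -> nat) :
  u != v -> u \notin P -> v \notin P ->
  (forall y, (y \in R) = [&& y \notin P, y != u & y != v]) ->
  \sum_y F y = \sum_(y in P) F y + F u + F v + \sum_(y in R) F y.
Proof.
move=> uv uP vP hR.
rewrite (bigID (mem P)) /= -!addnA; congr (_ + _).
rewrite (bigD1 u) //= (bigD1 v) /=; last by rewrite vP eq_sym.
congr (_ + (_ + _)); apply: eq_bigl => y; rewrite hR /=; by rewrite andbA.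
Qed.

Lemma sum_ind (T : finType) (P X : {set T}) K :
  X \subset P -> \sum_(x in P) ((x \in X) * K) = #|X| * K.
Proof.
move=> XP; rewrite -sum_nat_const big_mkcond [RHS]big_mkcond /=.
apply: eq_bigr => x _; case xX: (x \in X); rewrite ?mul1n ?mul0n.
  by rewrite (subsetP XP _ xX).
by case: (x \in P).
Qed.

Lemma sum_sub (T : finType) (P X : {set T}) (F : T -> nat) :
  X \subset P -> \sum_(x in X) F x = \sum_(x in P) ((x \in X) * F x).
Proof.
move=> XP; rewrite big_mkcond [RHS]big_mkcond /=.
apply: eq_bigr => x _; case xX: (x \in X); rewrite ?mul1n ?mul0n.
  by rewrite (subsetP XP _ xX).
by case: (x \in P).
Qed.

Lemma sum_all (T : finType) (R : {set T}) (f : T -> bool) :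
  \sum_(t in R) (f t : nat) = #|R| -> forall t, t \in R -> f t.
Proof.
move=> h t tR; apply: contraT => nf.
have : \sum_(t in R) (f t : nat) <= #|R|.-1.
  rewrite (cardsD1 t R) tR (bigD1 t tR) /= (negbTE nf) add0n -sum1_card.
  rewrite (eq_bigl (mem (R :\ t))); last by move=> y; rewrite /= !inE andbC.
  by apply: leq_sum => y _; case: (f y).
rewrite h; have : 0 < #|R| by apply/card_gt0P; exists t.
lia.
Qed.

Lemma iso_bip (T : finType) (e : rel T) (C : {set T}) n m :
  #|~: C| = n -> #|C| = m -> (forall y z, e y z = ((y \in C) != (z \in C))) ->
  graph_iso e (@Kbip_adj n m).
Proof.
move=> hQ hC he.
pose g (a : 'I_n + 'I_m) : T :=
  match a with
  | inl i => enum_val (A := mem (~: C)) (cast_ord (esym hQ) i)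
  | inr j => enum_val (A := mem C) (cast_ord (esym hC) j)
  end.
have gQ : forall i, g (inl i) \in ~: C by move=> i; exact: enum_valP.
have gC : forall j, g (inr j) \in C by move=> j; exact: enum_valP.
have ginj : injective g.
  move=> [i|j] [i'|j'] /=.
  - by move/enum_val_inj/(congr1 val) => /= h; congr inl; apply: val_inj.
  - move=> h; have := gQ i; rewrite /= h inE.
    by have := gC j'; rewrite /= => ->.
  - move=> h; have := gQ i'; rewrite /= -h inE.
    by have := gC j; rewrite /= => ->.
  - by move/enum_val_inj/(congr1 val) => /= h; congr inr; apply: val_inj.
have gbij : bijective g.
  apply: (inj_card_bij ginj).
  rewrite card_sum !card_ord -hQ -hC addnC cardsC.
  done.
case: gbij => f gf fg.
exists f; split; first by exists g.
move=> x y.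
rewrite -{2}(fg x) -{2}(fg y) he.
case: (f x) => [i|j]; case: (f y) => [i'|j'] /=.
- by move: (gQ i) (gQ i'); rewrite !inE => /negbTE -> /negbTE ->.
- by move: (gQ i) (gC j'); rewrite !inE => /negbTE -> ->.
- by move: (gC j) (gQ i'); rewrite !inE => -> /negbTE ->.
- by move: (gC j) (gC j') => -> ->.
Qed.
Lemma poly1 (a t m : nat) : (2*t+3+m)*(2+2*m) + a*(a+2*m) + a*(a+2*m) + 2*(a+2*t+3+m) + 8*a + 2*t + 2*t*t <= 2*((a+t+2+m)^2 + (a+t+2+m)).
Proof. nia. Qed.
Lemma poly2 (a t m : nat) : (2*t+1+m)*(2+2*m) + (a.+1)*(a.+1+2*m) + (a.+1)*(a.+1+2*m) + 2*(a.+1+t+1+m+1+t) + 2 <= 2*((a.+1+t+1+m)^2 + (a.+1+t+1+m)).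
Proof. nia. Qed.

Lemma arith0 n c a r b G ER Dl D :
  c + a + a + 2 + r = 2 * n + 1 -> b = c + a -> n + 1 <= b ->
  2 * (n ^ 2 + n) <= D -> D = G + 2 * b + ER ->
  G + 2 * Dl <= c * (2 + 2 * r) + a * (a + 2 * r) + a * (a + 2 * r) ->
  ER <= 2 * Dl -> (0 < ER -> ER + 2 <= 2 * Dl) ->
  a = 0 /\ ER = 0 /\ Dl = 0 /\ b = n + 1.
Proof.
move=> hT hb bn hD hDd hG k1 k2.
have [t bt] : exists t, b = n + 1 + t by exists (b - (n + 1)); lia.
have [m nm] : exists m, n = a + t + 2 + m by exists (n - (a + t + 2)); lia.
have ct : c = 2 * t + 3 + m by lia.
have rt : r = m by lia.
subst.
have := poly1 a t m.
set X := (2 * t + 3 + m) * (2 + 2 * m).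
set Y := a * (a + 2 * m).
set Z := (a + t + 2 + m) ^ 2.
move=> hp.
have : ER = 0 by case: (posnP ER) => // /k2; lia.
lia.
Qed.

Lemma arith1 n c a r b G ER Dl D :
  c + a + a + 2 + r = 2 * n + 1 -> b = c + a + 1 -> n + 1 <= b -> 1 <= a ->
  2 * (n ^ 2 + n) <= D -> D = G + 2 * b + ER ->
  G + 2 * Dl <= c * (2 + 2 * r) + a * (a + 2 * r) + a * (a + 2 * r) ->
  ER <= 2 * Dl -> False.
Proof.
move=> hT hb bn a1 hD hDd hG k1.
have [t bt] : exists t, b = n + 1 + t by exists (b - (n + 1)); lia.
have [a' aa] : exists a', a = a'.+1 by exists a.-1; lia.
have [m nm] : exists m, n = a'.+1 + t + 1 + m by exists (n - (a'.+1 + t + 1)); lia.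
have ct : c = 2 * t + 1 + m by lia.
have rt : r = m by lia.
subst.
have := poly2 a' t m.
set X := (2 * t + 1 + m) * (2 + 2 * m).
set Y := a'.+1 * (a'.+1 + 2 * m).
set Z := (a'.+1 + t + 1 + m) ^ 2.
lia.
Qed.

Ltac prune := repeat match goal with H : forall _, _ |- _ => clear H end.
Ltac clear_all := repeat match goal with H : _ |- _ => clear H end.

Lemma main_case (T : finType) (e : rel T) (n b : nat) (u v : T) :
  2 <= n -> simple_graph e -> #|T| = 2 * n + 1 -> n ^ 2 + n <= #|edges e| ->
  (forall a b : T, a != b -> deg e a = deg e b -> ~ path3 e a b) ->
  u != v -> deg e u = b -> deg e v = b -> n + 1 <= b ->
  b = n + 1 /\ graph_iso e (@Kbip_adj n (n + 1)).
Proof.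
move=> n2 [sym irr] cardT hedges Hp uv du dv bn.
have NP := nopath irr Hp.
pose P := [set y | (e u y || e v y) && (y != u) && (y != v)].
pose C := [set y | e u y && e v y].
pose U := [set y | e u y && ~~ e v y && (y != v)].
pose W := [set y | e v y && ~~ e u y && (y != u)].
pose R := [set y | (y \notin P) && (y != u) && (y != v)].
pose s x := \sum_(y in R) (e x y : nat).
pose eps := (e u v : nat).
have uP : u \notin P by rewrite !inE eqxx /= andbF.
have vP : v \notin P by rewrite !inE eqxx /= andbF.
have hR : forall y, (y \in R) = [&& y \notin P, y != u & y != v].
  by move=> y; rewrite !inE andbA.
have spl := fun F => split4 F uv uP vP hR.
have vu : v != u by rewrite eq_sym.
have dvu : deg e v = deg e u by rewrite du dv.
have duv : deg e u = deg e v by rewrite du dv.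
have euu : e u u = false by rewrite irr.
have evv : e v v = false by rewrite irr.
have evu : e v u = e u v by rewrite sym.
have inC : forall y, y \in C -> [/\ e u y, e v y, y != u & y != v].
  move=> y; rewrite !inE => /andP[euy evy]; split => //.
    by apply/eqP => eq; move: euy; rewrite eq irr.
  by apply/eqP => eq; move: evy; rewrite eq irr.
have inU : forall y, y \in U -> [/\ e u y, ~~ e v y, y != u & y != v].
  move=> y; rewrite !inE => /andP[/andP[euy evy] yv]; split => //.
  by apply/eqP => eq; move: euy; rewrite eq irr.
have inW : forall y, y \in W -> [/\ e v y, ~~ e u y, y != u & y != v].
  move=> y; rewrite !inE => /andP[/andP[evy euy] yu]; split => //.
  by apply/eqP => eq; move: evy; rewrite eq irr.
have inP : forall y, y \in P -> (y \in C) + (y \in U) + (y \in W) = 1 /\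
      (e u y : nat) = (y \in C) + (y \in U) /\ (e v y : nat) = (y \in C) + (y \in W).
  move=> y; rewrite !inE => /andP[/andP[h yu] yv]; rewrite yu yv !andbT.
  by case: (e u y) h; case: (e v y).
have CP : C \subset P.
  by apply/subsetP => y /inC[euy evy yu yv]; rewrite !inE euy yu yv.
have UP : U \subset P.
  by apply/subsetP => y /inU[euy evy yu yv]; rewrite !inE euy yu yv.
have WP : W \subset P.
  by apply/subsetP => y /inW[evy euy yu yv]; rewrite !inE evy yu yv orbT.
have inR : forall y, y \in R -> [/\ ~~ e u y, ~~ e v y, y \notin P, y != u & y != v].
  move=> y; rewrite hR => /and3P[yP yu yv]; split => //.
    by apply: contra yP => euy; rewrite !inE euy yu yv.
  by apply: contra yP => evy; rewrite !inE evy yu yv orbT.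
have F1 : forall x y, x \in C -> y \in P -> ~~ e x y.
  move=> x y /inC[eux evx xu xv]; rewrite !inE => /andP[/andP[h yu] yv].
  apply/negP => exy; case/orP: h => [euy|evy].
  - by apply: (NP v x y u vu dvu _ xu evx exy); rewrite 1?sym // eq_sym.
  - by apply: (NP u x y v uv duv _ xv eux exy); rewrite 1?sym // eq_sym.
have FU : forall x y, x \in U -> y \in P -> e x y -> y \in U :\ x.
  move=> x y xU yP exy.
  have [euy _ yu yv] : [/\ e u y || e v y, true, y != u & y != v].
    by move: yP; rewrite !inE => /andP[/andP[-> ->] ->].
  case/inU: xU => eux evx xu xv.
  have nevy : ~~ e v y.
    apply/negP => evy.
    by apply: (NP u x y v uv duv _ xv eux exy); rewrite 1?sym // eq_sym.
  rewrite !inE yv andbT (negbTE nevy) andbT.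
  have -> : y != x by apply/eqP => eq; move: exy; rewrite eq irr.
  by move: euy; rewrite (negbTE nevy) orbF.
have FW : forall x y, x \in W -> y \in P -> e x y -> y \in W :\ x.
  move=> x y xW yP exy.
  have [euvy _ yu yv] : [/\ e u y || e v y, true, y != u & y != v].
    by move: yP; rewrite !inE => /andP[/andP[-> ->] ->].
  case/inW: xW => evx eux xu xv.
  have neuy : ~~ e u y.
    apply/negP => euy.
    by apply: (NP v x y u vu dvu _ xu evx exy); rewrite 1?sym // eq_sym.
  rewrite !inE yu andbT (negbTE neuy) andbT.
  have -> : y != x by apply/eqP => eq; move: exy; rewrite eq irr.
  by move: euvy; rewrite (negbTE neuy).
have sr : forall x, s x <= #|R| by move=> x; exact: sum_le_card.
have degC : forall x, x \in C -> deg e x = (s x).+2.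
  move=> x xC; rewrite deg_sum (spl (fun y => e x y : nat)).
  rewrite big1; last by move=> y yP; rewrite (negbTE (F1 x y xC yP)).
  case/inC: (xC) => eux evx _ _.
  by rewrite (sym x u) eux (sym x v) evx /= /s add0n -addnA !add1n.
have hcT : #|T| = #|P| + 2 + #|R|.
  have := spl (fun _ => 1); by rewrite !sum1_card => ->; rewrite -(addnA _ 1 1).
have hP : #|P| = #|C| + #|U| + #|W|.
  rewrite -sum1_card -(muln1 #|C|) -(muln1 #|U|) -(muln1 #|W|) -(sum_ind 1 CP) -(sum_ind 1 UP) -(sum_ind 1 WP) -!big_split /=.
  apply: eq_bigr => y /inP[h _]; rewrite !muln1 h //.
have hUb : b = #|C| + #|U| + eps.
  rewrite -du deg_sum (spl (fun y => e u y : nat)) euu addn0.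
  rewrite [X in _ + X]big1 ?addn0; last by move=> y /inR[/negbTE -> _ _ _ _].
  rewrite -(muln1 #|C|) -(muln1 #|U|) -(sum_ind 1 CP) -(sum_ind 1 UP) -big_split /=.
  congr (_ + _); apply: eq_bigr => y /inP[_ [h _]]; rewrite !muln1 h //.
have hWb : b = #|C| + #|W| + eps.
  rewrite -dv deg_sum (spl (fun y => e v y : nat)) evv evu /= addn0.
  rewrite [X in _ + X]big1 ?addn0; last by move=> y /inR[_ /negbTE -> _ _ _].
  rewrite -(muln1 #|C|) -(muln1 #|W|) -(sum_ind 1 CP) -(sum_ind 1 WP) -big_split /=.
  by congr (_ + _); apply: eq_bigr => y /inP[_ [_ h]]; rewrite !muln1 h //.
set r := #|R|.
pose g x := \sum_(y in P) (e x y : nat) + e x u + e x v + 2 * s x.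
pose ER := \sum_(t in R) \sum_(t' in R) (e t t' : nat).
pose D := \sum_x \sum_y (e x y : nat).
have hD : 2 * (n ^ 2 + n) <= D.
  apply: leq_trans (edges_le sym irr); by rewrite leq_mul2l hedges orbT.
have hDdec : D = \sum_(x in P) g x + 2 * b + ER.
  rewrite /D (spl (fun x => \sum_y (e x y : nat))) -!deg_sum du dv.
  have hRrow : forall x, x \in R -> \sum_y (e x y : nat) = \sum_(y in P) (e x y : nat) + s x.
    move=> x xR; rewrite (spl (fun y => e x y : nat)).
    case/inR: xR => nux nvx _ _ _.
    by rewrite (sym x u) (sym x v) (negbTE nux) (negbTE nvx) !addn0.
  rewrite (eq_bigr _ hRrow) big_split /=.
  have -> : \sum_(x in R) \sum_(y in P) (e x y : nat) = \sum_(x in P) s x.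
    rewrite exchange_big /=; apply: eq_bigr => y _; apply: eq_bigr => x _; by rewrite sym.
  have hProw : forall x, x \in P -> \sum_y (e x y : nat) + s x = g x.
    move=> x _; rewrite (spl (fun y => e x y : nat)) /g /s; clear_all; lia.
  rewrite -/ER.
  have -> : \sum_(x in P) g x = \sum_(x in P) \sum_y (e x y : nat) + \sum_(x in P) s x.
    by rewrite -big_split /=; apply: eq_bigr => x xP; rewrite hProw.
  clear_all; lia.
pose Dl := \sum_(x in C) (r - s x).
have hG : \sum_(x in P) g x + 2 * Dl <=
    #|C| * (2 + 2 * r) + #|U| * (#|U| + 2 * r) + #|W| * (#|W| + 2 * r).
  rewrite /Dl (sum_sub _ CP) big_distrr /= -big_split /=.
  rewrite -(sum_ind _ CP) -(sum_ind _ UP) -(sum_ind _ WP) -!big_split /=.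
  apply: leq_sum => x xP.
  have [h1 _] := inP x xP.
  have : s x <= r := sr x.
  case xC: (x \in C) h1 => /=.
    move=> h1 hsr.
    have xU : (x \in U) = false by move: h1; case: (x \in U).
    have xW : (x \in W) = false by move: h1; case: (x \in U); case: (x \in W).
    rewrite xU xW /g big1; last by move=> y yP; rewrite (negbTE (F1 x y xC yP)).
    case/inC: xC => eux evx _ _.
    rewrite (sym x u) eux (sym x v) evx /=; move: hsr; clear_all; lia.
  case xU: (x \in U) => /=.
    move=> h1 hsr.
    have xW : (x \in W) = false by move: h1; case: (x \in W).
    rewrite xW /g.
    have hp : \sum_(y in P) (e x y : nat) <= #|U| - 1.
      have hc : #|U :\ x| = #|U| - 1 by rewrite (cardsD1 x U) xU; clear_all; lia.
      rewrite -hc -(muln1 #|U :\ x|) -(sum_ind 1 (subset_trans (subD1set U x) UP)).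
      apply: leq_sum => y yP; case exy: (e x y) => //=.
      by rewrite (FU x y xU yP exy).
    have : 0 < #|U| by apply/card_gt0P; exists x.
    case/inU: xU => eux nevx _ _.
    rewrite (sym x u) eux (sym x v) (negbTE nevx) /=.
    move: hp hsr; clear_all; lia.
  case xW: (x \in W) => //= _ hsr.
  rewrite /g.
  have hp : \sum_(y in P) (e x y : nat) <= #|W| - 1.
    have hc : #|W :\ x| = #|W| - 1 by rewrite (cardsD1 x W) xW; clear_all; lia.
    rewrite -hc -(muln1 #|W :\ x|) -(sum_ind 1 (subset_trans (subD1set W x) WP)).
    apply: leq_sum => y yP; case exy: (e x y) => //=.
    by rewrite (FW x y xW yP exy).
  have : 0 < #|W| by apply/card_gt0P; exists x.
  case/inW: xW => evx neux _ _.
  rewrite (sym x u) (negbTE neux) (sym x v) evx /=.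
  move: hp hsr; clear_all; lia.
have eps1 : eps <= 1 by rewrite /eps; case: (e u v).
have hRC : #|R| < #|C| by rewrite -/r; move: hcT cardT hP hUb hWb bn eps1; clear_all; lia.
have hH : forall x x' t t', x \in C -> x' \in C -> x != x' ->
      \sum_(y in R) (e x y : nat) = \sum_(y in R) (e x' y : nat) ->
      t \in R -> t' \in R -> e x t -> e x' t' -> t != t' -> ~~ e t t'.
  move=> x x' t t' xC x'C xx' sxx' tR t'R ext ex't tt'.
  apply/negP => ett'.
  have dxx' : deg e x = deg e x' by rewrite (degC x xC) (degC x' x'C) /s sxx'.
  have xt' : x != t'.
    apply/eqP => eq; case/inR: t'R => _ _ t'P _ _; move: t'P; by rewrite -eq (subsetP CP x xC).
  have tx' : t != x'.
    apply/eqP => eq; case/inR: tR => _ _ tP _ _; move: tP; by rewrite eq (subsetP CP x' x'C).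
  by apply: (NP x t t' x' xx' dxx' xt' tx' ext ett'); rewrite sym.
have [k1 k2] : ER <= 2 * Dl /\ (0 < ER -> ER + 2 <= 2 * Dl) := key irr hRC hH.
have aUW : #|U| = #|W| by move: hUb hWb; clear_all; lia.
rewrite -aUW in hG.
case euv: (e u v); rewrite /eps euv /= in hUb hWb.
-
  exfalso.
  case: (posnP #|U|) => [a0|apos]; last first.
    have hsz : #|C| + #|U| + #|U| + 2 + r = 2 * n + 1 by move: hcT cardT hP aUW; clear_all; lia.
    have hb1 : b = #|C| + #|U| + 1 by move: hUb; clear_all; lia.
    exact: (@arith1 n #|C| #|U| r b (\sum_(x in P) g x) ER Dl D hsz hb1 bn apos hD hDdec hG k1).
  have Cinj : {in C &, injective s}.
    move=> x x' xC x'C sxx'; apply/eqP; apply: contraT => xx'.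
    have dxx' : deg e x = deg e x' by rewrite (degC x xC) (degC x' x'C) sxx'.
    case/inC: (xC) => eux evx xu xv.
    case/inC: (x'C) => eux' evx' x'u x'v.
    by exfalso; apply: (NP x u v x' xx' dxx' xv _ _ euv evx'); rewrite 1?sym // eq_sym.
  have cle := ph Cinj (fun x _ => sr x).
  have cr : #|C| = r.+1 by move: cle hcT cardT hP a0 aUW hUb bn; clear_all; lia.
  have r1 : 1 <= r by move: cr hcT cardT hP a0 aUW n2; clear_all; lia.
  case: (boolP [exists x in C, s x == r]) => [/exists_inP[x xC /eqP sxr]|/exists_inPn hn]; last first.
    have := @ph _ C s r.-1 Cinj.
    have : forall x, x \in C -> s x <= r.-1.
      move=> x xC; move: (hn x xC) (sr x); rewrite -/r; clear_all; lia.
    move=> h /(_ h); move: cr r1; clear_all; lia.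
  have dx : deg e x = deg e u by rewrite du (degC x xC) sxr; move: hUb cr a0; clear_all; lia.
  have [x' x'C x'x] : exists2 x', x' \in C & x' != x.
    have : 0 < #|C :\ x| by rewrite (cardsD1 x C) xC in cr; move: cr r1; clear_all; lia.
    by case/card_gt0P => x'; rewrite in_setD1 => /andP[x'x x'C]; exists x'.
  case/inC: (xC) => eux evx xu xv.
  case/inC: (x'C) => eux' evx' x'u x'v.
  by apply: (NP x v x' u xu dx _ vu _ evx' _); rewrite 1?sym // eq_sym.
-
  have hsz : #|C| + #|U| + #|U| + 2 + r = 2 * n + 1 by move: hcT cardT hP aUW; clear_all; lia.
  have hb0 : b = #|C| + #|U| by move: hUb; clear_all; lia.
  have [a0 [ER0 [Dl0 bn1]]] := @arith0 n #|C| #|U| r b (\sum_(x in P) g x) ER Dl D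
     hsz hb0 bn hD hDdec hG k1 k2.
  split => //.
  have U0 : U = set0 by apply: cards0_eq.
  have W0 : W = set0 by apply: cards0_eq; move: a0 aUW; clear_all; lia.
  have PC : forall y, y \in P -> y \in C.
    move=> y /inP[h _]; move: h; rewrite U0 W0 !inE; by case: (e u y && e v y).
  have sxr : forall x, x \in C -> forall t, t \in R -> e x t.
    move=> x xC; apply: sum_all.
    have : r - s x == 0.
      by move/eqP: Dl0; rewrite /Dl sum_nat_eq0 => /forall_inP /(_ x xC).
    move: (sr x); rewrite /s -/r; clear_all; lia.
  have Rind : forall t t', t \in R -> t' \in R -> ~~ e t t'.
    move=> t t' tR t'R.
    move/eqP: ER0; rewrite /ER sum_nat_eq0 => /forall_inP /(_ t tR).
    rewrite sum_nat_eq0 => /forall_inP /(_ t' t'R); by case: (e t t').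
  have notC : forall y, y \notin C -> [\/ y = u, y = v | y \in R].
    move=> y yC; case: (y =P u) => [->|yu]; first by constructor 1.
    case: (y =P v) => [->|yv]; first by constructor 2.
    constructor 3; rewrite hR; apply/and3P; split; try by apply/eqP.
    by apply: contra yC; apply: PC.
  have hCQ : forall y z, y \in C -> z \notin C -> e y z.
    move=> y z yC /notC[->|->|zR].
    - by case/inC: yC => euy _ _ _; rewrite sym.
    - by case/inC: yC => _ evy _ _; rewrite sym.
    - exact: sxr.
  have hQQ : forall y z, y \notin C -> z \notin C -> ~~ e y z.
    have hu : forall z, z \notin C -> ~~ e u z.
      move=> z zC; apply/negP => euz; move: zC; rewrite PC //.
      rewrite !inE euz /=; apply/andP; split; apply/eqP => eq; move: euz; by rewrite eq ?irr ?euv.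
    have hv : forall z, z \notin C -> ~~ e v z.
      move=> z zC; apply/negP => evz; move: zC; rewrite PC //.
      rewrite !inE evz orbT /=; apply/andP; split; apply/eqP => eq; move: evz; by rewrite eq ?irr ?evu ?euv.
    move=> y z /notC[->|->|yR] zC; [exact: hu | exact: hv|].
    case/notC: zC => [->|->|zR].
    - by rewrite sym; case/inR: yR.
    - by rewrite sym; case/inR: yR.
    - exact: Rind.
  apply: (@iso_bip _ _ C).
  - move: (cardsC C) cardT hUb a0 bn1; clear_all; lia.
  - move: hUb a0 bn1; clear_all; lia.
  - move=> y z; case yC: (y \in C); case zC: (z \in C) => /=.
    + by apply/negbTE/F1; rewrite // (subsetP CP).
    + by apply: hCQ; rewrite ?zC.
    + by rewrite sym; apply: hCQ; rewrite ?yC.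
    + by apply/negbTE/hQQ; rewrite ?yC ?zC.
Qed.
Theorem lemma2p2 (n : nat) (T : finType) (e : rel T) (beta : nat) :
  2 <= n ->
  simple_graph e ->
  #|T| = 2 * n + 1 ->
  n ^ 2 + n <= #|edges e| ->
  (forall a b : T, a != b -> deg e a = deg e b -> ~ path3 e a b) ->
  (* beta is the largest integer such that two distinct vertices have degree beta *)
  (exists a b : T, [/\ a != b, deg e a = beta & deg e b = beta]) ->
  (forall a b : T, a != b -> deg e a = deg e b -> deg e a <= beta) ->
  beta <= n + 1 /\
  (beta = n + 1 -> graph_iso e (@Kbip_adj n (n + 1))).
Proof.
move=> n2 sg cT hE Hp [a [b [ab da db]]] _.
have mc := fun hb => @main_case T e n beta a b n2 sg cT hE Hp ab da db hb.
split.
  case: (leqP beta (n + 1)) => // h.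
  have [h' _] := mc (ltnW h); lia.
move=> hb; have [_ iso] := mc (eq_leq (esym hb)); exact: iso.
Qed.
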